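(* Let $k\geq 3$ and let $n$ be such that $\frac{n}{k-1}$ is an integer at least $4$. Then $\rho(\mathcal{F}_i)<\rho(\mathcal{F})$ for $i=2,3$.
   Context: Hypergraphs are simple, undirected, $k$-uniform (every edge has exactly $k$ vertices). The adjacency matrix has $(\mathcal{A}_{\mathcal{G}})_{ij}=\sum_{e\in E,\ i,j\in e}\frac{1}{|e|-1}$ for $i\neq j$ and zero diagonal, and $\rho(\mathcal{G})$ is its spectral radius. Let $\mathbb{C}$ be the $k$-uniform 2-hypercycle consisting of two edges $e_1,e_2$ with $e_1\cap e_2=\{v_1,v_2\}$, i.e. $e_i=\{v_1,v_{a(i,1)},\dots,v_{a(i,k-2)},v_2\}$ ($i=1,2$), all listed vertices distinct. Attaching a pendant edge at a vertex $v$ means adding a new edge consisting of $v$ and $k-1$ new vertices. Fix a vertex $\eta\in e_2\setminus\{v_1,v_2\}$. All of the following have order $n$: $\mathcal{F}$ is obtained from $\mathbb{C}$ by attaching $\frac{n}{k-1}-3$ pendant edges at $v_1$ and one pendant edge at $v_2$; $\mathcal{F}_2$ is obtained from $\mathbb{C}$ by attaching $\frac{n}{k-1}-3$ pendant edges at $\eta$ and one pendant edge at $v_1$; $\mathcal{F}_3$ is obtained from $\mathbb{C}$ by attaching $\frac{n}{k-1}-3$ pendant edges at $v_1$ and one pendant edge at $\eta$. *)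

(* Defs.v *)
From HB Require Import structures.
From mathcomp Require Import all_boot all_order all_algebra all_field.
Set Implicit Arguments. Unset Strict Implicit. Unset Printing Implicit Defensive.
Import Order.TTheory GRing.Theory Num.Theory.
Local Open Scope ring_scope.

Definition hadj (n : nat) (E : seq {set 'I_n}) : 'M[algC]_n :=
  \matrix_(i, j) (if i == j then 0
                  else \sum_(e <- E | (i \in e) && (j \in e)) ((#|e| - 1)%:R)^-1).

Definition eigvals (n : nat) (A : 'M[algC]_n) : seq algC :=
  sval (closed_field_poly_normal (char_poly A)).

Definition spec_rad (n : nat) (A : 'M[algC]_n) : algC :=
  \big[Num.max/0]_(z <- eigvals A) `|z|.

Definition hrho (n : nat) (E : seq {set 'I_n}) : algC := spec_rad (hadj E).

(* Vertex labelling (n = m(k-1)):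
   v1 = 0, v2 = 1,
   e1 = {0, 1, 2, ..., k-1},  e2 = {0, 1} U {k, ..., 2k-3},
   the j-th pendant edge (j = 0, 1, ...) uses the new vertices
   2k-2 + j(k-1), ..., 2k-2 + (j+1)(k-1) - 1 together with its attachment vertex. *)
Definition e1_edge (n k : nat) : {set 'I_n} := [set i : 'I_n | (i < k)%N].
Definition e2_edge (n k : nat) : {set 'I_n} :=
  [set i : 'I_n | (i < 2)%N || ((k <= i)%N && (i < 2 * k - 2)%N)].
Definition pendant (n k j a : nat) : {set 'I_n} :=
  [set i : 'I_n | (val i == a) ||
     ((2 * k - 2 + j * (k - 1) <= i)%N && (i < 2 * k - 2 + j.+1 * (k - 1))%N)].

(* The 2-hypercycle C with n/(k-1) - 3 pendant edges attached at vertex a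
   and one pendant edge attached at vertex b. *)
Definition hyp (n k a b : nat) : seq {set 'I_n} :=
  [:: e1_edge n k, e2_edge n k & 
      [seq pendant n k j a | j <- iota 0 (n %/ (k - 1) - 3)]
      ++ [:: pendant n k (n %/ (k - 1) - 3) b]].

Definition hF  (n k : nat) := hyp n k 0 1.
Definition hF2 (n k eta : nat) := hyp n k eta 0.
Definition hF3 (n k eta : nat) := hyp n k 0 eta.

(* Main.v *)
Require Import Defs.
From HB Require Import structures.
From mathcomp Require Import all_boot all_order all_algebra all_field.
From mathcomp Require Import ring zify.
Import Order.TTheory GRing.Theory Num.Theory.
Local Open Scope ring_scope.
Set Implicit Arguments. Unset Strict Implicit. Unset Printing Implicit Defensive.

Section SR.
Variable n : nat.
Implicit Types A : 'M[algC]_n.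

Lemma eigvalsE A z : (z \in eigvals A) = root (char_poly A) z.
Proof.
rewrite /eigvals; case: (closed_field_poly_normal _) => r /= Hr.
rewrite [in RHS]Hr (monicP (char_poly_monic A)) scale1r root_prod_XsubC //.
Qed.

Lemma size_eigvals A : size (eigvals A) = n.
Proof.
rewrite /eigvals; case: (closed_field_poly_normal _) => r /= Hr.
have := size_char_poly A; rewrite Hr (monicP (char_poly_monic A)) scale1r.
by rewrite size_prod_XsubC => -[].
Qed.

Lemma bigmax_norm_props (s : seq algC) :
  let M := \big[Num.max/0]_(z <- s) `|z| in
  [/\ M \is Num.real, 0 <= M, (forall z, z \in s -> `|z| <= M) &
      (s != [::] -> exists2 z, z \in s & M = `|z|)].
Proof.
elim: s => [|a s IH] /=; first by rewrite big_nil; split => //.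
have sn0 : `|a| < \big[Num.max/0]_(z <- s) `|z| -> s != [::].
  by case: (s) => // ; rewrite big_nil normr_lt0.
case: IH => Mr M0 Mge Matt; rewrite big_cons.
set M := \big[_/_]_(_ <- _) _ in Mr M0 Mge Matt *.
have ar : `|a| \is Num.real by apply: normr_real.
split.
- by rewrite /Num.max; case: ifP.
- by rewrite /Num.max; case: ifP.
- move=> z; rewrite inE => /orP[/eqP->|zs].
    by rewrite /Num.max; case: ifPn => // /ltW.
  apply: le_trans (Mge _ zs) _; rewrite /Num.max; case: ifPn => // h.
  by move: h; rewrite real_ltNge // negbK.
- move=> _; rewrite /Num.max; case: ifPn => h.
    have sn := sn0 h.
    by have [z zs ->] := Matt sn; exists z => //; rewrite inE zs orbT.
  by exists a; rewrite ?mem_head.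
Qed.

Lemma spec_rad_ge A z : z \in eigvals A -> `|z| <= spec_rad A.
Proof. by case: (bigmax_norm_props (eigvals A)) => _ _ H _; apply: H. Qed.

Lemma spec_rad_ge0 A : 0 <= spec_rad A.
Proof. by case: (bigmax_norm_props (eigvals A)). Qed.

Lemma spec_rad_att A : (0 < n)%N -> exists2 z, z \in eigvals A & spec_rad A = `|z|.
Proof.
move=> n0; case: (bigmax_norm_props (eigvals A)) => _ _ _ H; apply: H.
by rewrite -size_eq0 size_eigvals -lt0n.
Qed.

End SR.

Section Ray.
Local Open Scope sesquilinear_scope.
Variable n : nat.
Variable A : 'M[algC]_n.
Hypothesis Asym : forall i j, A i j = A j i.
Hypothesis Areal : forall i j, A i j \is Num.real.

Lemma AtC : A ^t* = A.
Proof. by apply/matrixP => i j; rewrite !mxE (CrealP (Areal _ _)) Asym. Qed.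

Lemma eig_spec_diag j : spectral_diag A 0 j \in eigvals A.
Proof.
have An : A \is normalmx by apply/normalmxP; rewrite AtC.
have AE := orthomx_spectralP An.
set P := spectralmx A in AE; set d := spectral_diag A in AE *.
have PU : P \is unitarymx := spectral_unitarymx A.
have iP : invmx P = P ^t* := invmx_unitary PU.
rewrite eigvalsE -eigenvalue_root_char; apply/eigenvalueP.
exists (row j P).
  have PA : P *m A = diag_mx d *m P.
    by rewrite {1}AE iP !mulmxA (unitarymxP PU) mul1mx.
  rewrite -row_mul PA mul_diag_mx; apply/rowP => l; rewrite !mxE //.
apply/eqP => rj0.
have := congr1 (row j) (unitarymxP PU); rewrite row_mul rj0 mul0mx.
move/rowP/(_ j); rewrite !mxE eqxx /=.
by move/eqP; rewrite eq_sym oner_eq0.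
Qed.

Lemma rayleigh (z : 'I_n -> algC) : (forall i, z i \is Num.real) ->
  \sum_i z i * (\sum_j A i j * z j) <= spec_rad A * \sum_i z i ^+ 2.
Proof.
move=> zr.
have An : A \is normalmx by apply/normalmxP; rewrite AtC.
have AE := orthomx_spectralP An.
set P := spectralmx A in AE; set d := spectral_diag A in AE.
have PU : P \is unitarymx := spectral_unitarymx A.
have iP : invmx P = P ^t* := invmx_unitary PU.
have dr : forall j, d 0 j \is Num.real.
  have := hermitian_spectral_diag_real (A := A).
  rewrite -/d => H j; have : d \is a realmx.
    apply: H; rewrite qualifE /= expr0 scale1r AtC //.
  by move/mxOverP => /(_ 0 j).
pose x : 'rV_n := \row_i z i.
have xc : x ^t* = x ^T.
  by apply/matrixP => i j; rewrite !mxE (CrealP (zr _)).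
pose u := x *m P ^t*.
have uc : u ^t* = P *m x ^t*.
  by rewrite /u trmx_mul map_mxM trmxCK.
have E1 : \sum_i z i * (\sum_j A i j * z j) = (u *m diag_mx d *m u ^t*) 0 0.
  rewrite uc /u.
  have -> : x *m P ^t* *m diag_mx d *m (P *m x ^t*) = x *m A *m x ^t*.
    by rewrite AE iP !mulmxA.
  rewrite xc.
  rewrite !mxE; apply: eq_bigr => i _.
  rewrite [RHS]mulrC !mxE; congr (_ * _); apply: eq_bigr => j _; rewrite !mxE Asym mulrC //.
have E2 : \sum_i z i ^+ 2 = (u *m u ^t*) 0 0.
  rewrite uc /u.
  have -> : x *m P ^t* *m (P *m x ^t*) = x *m x ^t*.
    by rewrite mulmxA (mulmxKtV _ PU).
  rewrite xc !mxE; apply: eq_bigr => i _; rewrite !mxE expr2 //.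
rewrite E1 E2; clearbody u; rewrite !mxE big_distrr /=; apply: ler_sum => j _.
rewrite mul_mx_diag !mxE.
rewrite mulrAC [_ * d 0 j]mulrC -normCK; apply: ler_wpM2r; first exact: exprn_ge0.
apply: le_trans (real_ler_norm (dr j)) _.
exact: spec_rad_ge (eig_spec_diag j).
Qed.

End Ray.

Lemma sum_delta n (i : 'I_n) (f : 'I_n -> algC) :
  \sum_l (l == i)%:R * f l = f i.
Proof.
rewrite (bigD1 i) //= eqxx mul1r big1 ?addr0 // => l /negPf ->; by rewrite mul0r.
Qed.

Section PF.
Variable n : nat.
Variable A : 'M[algC]_n.
Hypothesis Asym : forall i j, A i j = A j i.
Hypothesis Areal : forall i j, A i j \is Num.real.
Hypothesis Age0 : forall i j, 0 <= A i j.
Hypothesis Adiag : forall i, A i i = 0.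

Definition Av (z : 'I_n -> algC) i := \sum_j A i j * z j.
Definition quad (z : 'I_n -> algC) := \sum_i z i * Av z i.
Definition nrm (z : 'I_n -> algC) := \sum_i z i ^+ 2.

Local Notation rho := (spec_rad A).

Lemma rayleigh' z : (forall i, z i \is Num.real) -> quad z <= rho * nrm z.
Proof. exact: rayleigh. Qed.

Lemma variational z : (forall i, z i \is Num.real) -> rho * nrm z <= quad z ->
  forall i, Av z i = rho * z i.
Proof.
move=> zr H0 i.
have rr : rho \is Num.real by apply: ger0_real; apply: spec_rad_ge0.
have r0 : 0 <= rho by apply: spec_rad_ge0.
have avr : Av z i \is Num.real.
  by apply: rpred_sum => j _; apply: rpredM.
set c := Av z i - rho * z i.
have cr : c \is Num.real by rewrite rpredB // rpredM.
have r1 : rho + 1 != 0 by rewrite gt_eqF // ltr_wpDl.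
set e := c / (rho + 1).
have er : e \is Num.real by rewrite /e rpredM // rpredV rpredD // rpred1.
pose x := fun l => z l + (l == i)%:R * e.
have xr : forall l, x l \is Num.real by move=> l; rewrite /x rpredD // rpredM // rpred_nat.
have Ax : forall l, Av x l = Av z l + e * A l i.
  move=> l; rewrite /Av /x.
  under eq_bigr do rewrite mulrDr.
  rewrite big_split /=; congr (_ + _).
  under eq_bigr do rewrite mulrCA.
  by rewrite sum_delta mulrC.
have Nx : nrm x = nrm z + 2 * e * z i + e ^+ 2.
  rewrite /nrm /x.
  have -> : \sum_l (z l + (l == i)%:R * e) ^+ 2 =
     \sum_l (z l ^+ 2 + (l == i)%:R * (2 * e * z l + e ^+ 2)).
    by apply: eq_bigr => l _; case: (l == i); rewrite /= ?mul1r ?mul0r; ring.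
  by rewrite big_split /= sum_delta addrA.
have Qx : quad x = quad z + 2 * e * Av z i.
  rewrite /quad; under eq_bigr do rewrite Ax /x.
  have -> : \sum_l (z l + (l == i)%:R * e) * (Av z l + e * A l i) =
     \sum_l (z l * Av z l + e * (z l * A l i) + (l == i)%:R * (e * Av z l + e * e * A l i)).
    by apply: eq_bigr => l _; case: (l == i); rewrite /= ?mul1r ?mul0r; ring.
  rewrite !big_split /= sum_delta Adiag -big_distrr /=.
  have -> : \sum_l z l * A l i = Av z i.
    by rewrite /Av; apply: eq_bigr => l _; rewrite Asym mulrC.
  ring.
have H := rayleigh' xr; rewrite Qx Nx in H.
have H1 : 0 <= rho * e ^+ 2 - 2 * e * c.
  have : 0 <= rho * (nrm z + 2 * e * z i + e ^+ 2) - (quad z + 2 * e * Av z i).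
    by rewrite subr_ge0.
  move=> h; apply: le_trans h _; rewrite -subr_ge0.
  have -> : rho * e ^+ 2 - 2 * e * c -
      (rho * (nrm z + 2 * e * z i + e ^+ 2) - (quad z + 2 * e * Av z i))
      = quad z - rho * nrm z by rewrite /c; ring.
  by rewrite subr_ge0.
have H2 : rho * e ^+ 2 - 2 * e * c = - ((rho + 2) * e ^+ 2).
  have -> : c = e * (rho + 1) by rewrite /e mulfVK.
  ring.
rewrite H2 oppr_ge0 in H1.
have e2 : e ^+ 2 = 0.
  apply/eqP; rewrite eq_le; apply/andP; split.
    by rewrite -(pmulr_rle0 _ (ltr_wpDl r0 (ltr0n _ 2))).
  by apply: real_exprn_even_ge0.
have : c = 0.
  move/eqP: e2; rewrite expf_eq0 /= => /eqP e0.
  by move: e0; rewrite /e => /eqP; rewrite mulf_eq0 invr_eq0 (negPf r1) orbF => /eqP.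
by move/eqP; rewrite subr_eq0 => /eqP.
Qed.

Lemma weak_PF : (0 < n)%N -> exists z : 'I_n -> algC,
  [/\ forall i, 0 <= z i, exists i, z i != 0 & forall i, Av z i = rho * z i].
Proof.
move=> n0; have [l lE rl] := spec_rad_att A n0.
move: lE; rewrite eigvalsE -eigenvalue_root_char => /eigenvalueP [v vA v0].
pose z := fun i => `|v 0 i|.
have zr : forall i, z i \is Num.real by move=> i; apply: normr_real.
exists z; split.
- by move=> i; apply: normr_ge0.
- have [i vi] : exists i, v 0 i != 0.
    apply/existsP; apply: contraR v0 => /existsPn H.
    by apply/eqP/rowP => i; rewrite mxE; apply/eqP; have := H i; rewrite negbK.
  by exists i; rewrite normr_eq0.
apply: variational => //.
have N0 : 0 <= \sum_i v 0 i * (v 0 i)^*.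
  by apply: sumr_ge0 => i _; rewrite -normCK exprn_ge0.
have -> : rho * nrm z = `|l * \sum_i v 0 i * (v 0 i)^*|.
  rewrite normrM (ger0_norm N0) rl /nrm /z; congr (_ * _).
  by apply: eq_bigr => i _; rewrite normCK.
have -> : l * \sum_i v 0 i * (v 0 i)^* = \sum_i (\sum_j v 0 j * A j i) * (v 0 i)^*.
  rewrite big_distrr /=; apply: eq_bigr => i _.
  have := congr1 (fun M : 'rV_n => M 0 i) vA; rewrite !mxE => ->.
  by rewrite mulrA.
apply: le_trans (ler_norm_sum _ _ _) _.
rewrite /quad /Av; apply: ler_sum => i _.
rewrite normrM norm_conjC mulrC; apply: ler_wpM2l; first exact: normr_ge0.
apply: le_trans (ler_norm_sum _ _ _) _; apply: ler_sum => j _.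
by rewrite normrM (ger0_norm (Age0 _ _)) Asym mulrC.
Qed.

End PF.

Section Hyp.
Variable n : nat.
Implicit Types (E : seq {set 'I_n}) (e : {set 'I_n}) (z : 'I_n -> algC).

Definition w e : algC := ((#|e| - 1)%:R)^-1.
Definition Ys z e := \sum_(i in e) z i.
Definition S2 z e := \sum_(i in e) z i ^+ 2.

Lemma w_ge0 e : 0 <= w e.
Proof. by rewrite /w invr_ge0 ler0n. Qed.

Lemma hadj_sym E i j : hadj E i j = hadj E j i.
Proof.
rewrite !mxE eq_sym; case: eqP => // _.
by apply: eq_bigl => e; rewrite andbC.
Qed.

Lemma hadj_ge0 E i j : 0 <= hadj E i j.
Proof.
rewrite !mxE; case: eqP => // _; apply: sumr_ge0 => e _; exact: w_ge0.
Qed.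

Lemma hadj_real E i j : hadj E i j \is Num.real.
Proof. exact/ger0_real/hadj_ge0. Qed.

Lemma hadj_diag E i : hadj E i i = 0.
Proof. by rewrite !mxE eqxx. Qed.

Lemma hadj_Av E z i :
  Av (hadj E) z i = \sum_(e <- E | i \in e) w e * (Ys z e - z i).
Proof.
rewrite /Av.
have -> : \sum_j hadj E i j * z j =
   \sum_j \sum_(e <- E | i \in e) (j \in e)%:R * (j != i)%:R * w e * z j.
  apply: eq_bigr => j _; rewrite mxE.
  case: (i =P j) => [->|/eqP ij].
    by rewrite mul0r; apply/esym/big1 => e _; rewrite eqxx mulr0 !mul0r.
  rewrite eq_sym ij big_distrl /= big_mkcondr /=; apply: eq_bigr => e _.
  by case: (j \in e); rewrite ?mul1r ?mul0r.
rewrite exchange_big /=; apply: eq_bigr => e ie.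
rewrite /Ys (bigD1 i) //= eqxx /= mulr0 !mul0r add0r.
rewrite [X in _ = _ * (X - _)](bigD1 i) //= addrC addrK big_distrr /=.
rewrite [LHS]big_mkcond [RHS]big_mkcond; apply: eq_bigr => j _.
case: (j =P i) => [->|/eqP ji]; first by rewrite andbF.
rewrite /= andbT; case: (j \in e); rewrite /= ?mul1r ?mul0r ?mulr1 //.
Qed.

Lemma quad_edges E z :
  quad (hadj E) z = \sum_(e <- E) w e * (Ys z e ^+ 2 - S2 z e).
Proof.
rewrite /quad.
under eq_bigr do rewrite hadj_Av big_distrr /= big_mkcond /=.
rewrite exchange_big /=; apply: eq_bigr => e _.
have -> : Ys z e ^+ 2 - S2 z e = \sum_(i in e) z i * (Ys z e - z i).
  rewrite /S2 expr2 {1}/Ys big_distrl /= -sumrB; apply: eq_bigr => i _.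
  by rewrite mulrBr mulrC expr2.
rewrite big_distrr /= [RHS]big_mkcond /=; apply: eq_bigr => i _.
by case: (i \in e); rewrite ?mulr0 // mulrCA.
Qed.

Definition swapf (a b : 'I_n) z : 'I_n -> algC :=
  fun i => if i == a then z b else if i == b then z a else z i.

Lemma sum_swap (P : pred 'I_n) (f : algC -> algC) a b z : a != b ->
  \sum_(i | P i) f (swapf a b z i) =
  \sum_(i | P i) f (z i) + (P a)%:R * (f (z b) - f (z a))
                         + (P b)%:R * (f (z a) - f (z b)).
Proof.
move=> ab.
have -> : \sum_(i | P i) f (swapf a b z i) = \sum_(i | P i) (f (z i) +
   ((i == a)%:R * (f (z b) - f (z a)) + (i == b)%:R * (f (z a) - f (z b)))).
  apply: eq_bigr => i _; rewrite /swapf.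
  case: (i =P a) => [->|_]; first by rewrite (negPf ab) /=; ring.
  by case: (i =P b) => [->|_] /=; ring.
rewrite big_split /= big_split /= -!addrA; congr (_ + (_ + _)).
  rewrite big_mkcond /=; rewrite -(sum_delta a (fun i => (P i)%:R * (f (z b) - f (z a)))).
  by apply: eq_bigr => i _; case: (i =P a) => [->|_]; case: (P _); rewrite /= ?mul1r ?mul0r.
rewrite big_mkcond /=; rewrite -(sum_delta b (fun i => (P i)%:R * (f (z a) - f (z b)))).
by apply: eq_bigr => i _; case: (i =P b) => [->|_]; case: (P _); rewrite /= ?mul1r ?mul0r.
Qed.

End Hyp.

Section Gen.
Variable n : nat.
Implicit Types (E : seq {set 'I_n}) (e : {set 'I_n}) (z : 'I_n -> algC).

Lemma w_neq0 e : (1 < #|e|)%N -> w e != 0.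
Proof.
by move=> h; rewrite /w invr_eq0 pnatr_eq0 -lt0n subn_gt0.
Qed.

Lemma propagate E z r : (forall i, 0 <= z i) ->
  (forall i, Av (hadj E) z i = r * z i) ->
  forall i e, z i = 0 -> e \in E -> i \in e -> (1 < #|e|)%N ->
  forall j, j \in e -> z j = 0.
Proof.
move=> z0 eig i e zi eE ie ce.
have := eig i; rewrite zi mulr0 hadj_Av (big_rem _ eE) ie /=.
have Ys0 : forall e', 0 <= Ys z e' by move=> e'; apply: sumr_ge0.
have rest : 0 <= \sum_(y <- rem e E | i \in y) w y * (Ys z y - z i).
  by apply: sumr_ge0 => e' _; rewrite zi subr0 mulr_ge0 // w_ge0.
move=> /eqP; rewrite paddr_eq0 ?(mulr_ge0 (w_ge0 _)) // ?zi ?subr0 //.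
case/andP => /eqP; move/eqP; rewrite mulf_eq0 (negPf (w_neq0 ce)) /= => /eqP hY _.
by apply: (psumr_eq0P _ hY).
Qed.

Lemma quad_eig E z r : (forall i, Av (hadj E) z i = r * z i) ->
  quad (hadj E) z = r * nrm z.
Proof.
move=> eig; rewrite /quad /nrm big_distrr /=; apply: eq_bigr => i _.
by rewrite eig mulrCA expr2.
Qed.

Lemma cmp E y r : (forall i, y i \is Num.real) -> 0 < nrm y -> r \is Num.real ->
  r * nrm y <= quad (hadj E) y -> (exists i, Av (hadj E) y i != r * y i) ->
  r < hrho E.
Proof.
move=> yr ny rr H [i Hi].
have Asym := @hadj_sym n E; have Areal := @hadj_real n E.
have Age := @hadj_ge0 n E; have Ad := @hadj_diag n E.
have R := rayleigh' Asym Areal yr.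
have le : r <= hrho E.
  by rewrite -(ler_pM2r ny); apply: le_trans H R.
rewrite lt_neqAle le andbT; apply/eqP => req.
have := variational Asym Areal Ad yr; rewrite -/(hrho E) -req => /(_ H i) h.
by rewrite h eqxx in Hi.
Qed.

End Gen.

Section Spec.
Variables n k eta : nat.
Hypothesis Hk : (3 <= k)%N.
Hypothesis Hdiv : (k - 1 %| n)%N.
Hypothesis Hm : (4 <= n %/ (k - 1))%N.
Hypothesis He1 : (k <= eta)%N.
Hypothesis He2 : (eta < 2 * k - 2)%N.

Local Notation p := (n %/ (k - 1) - 3)%N.

Lemma nE : n = (n %/ (k - 1) * (k - 1))%N.
Proof. by rewrite divnK. Qed.

Lemma n_top : (2 * k - 2 + p.+1 * (k - 1) = n)%N.
Proof.
rewrite [RHS]nE; move: Hm; move: (n %/ (k - 1))%N => m hm; nia.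
Qed.

Lemma n_gt : (2 * k - 2 < n)%N.
Proof. rewrite -n_top; nia. Qed.

Definition small (a : 'I_n) := (a < 2 * k - 2)%N.

Definition blk j : {set 'I_n} :=
  [set i : 'I_n | (2 * k - 2 + j * (k - 1) <= i)%N && (i < 2 * k - 2 + j.+1 * (k - 1))%N].

Lemma notin_blk j (a : 'I_n) : small a -> a \notin blk j.
Proof. rewrite /small inE => h; apply/negP => /andP[h1 _]; lia. Qed.

Lemma pendantE j (a : 'I_n) : small a -> pendant n k j a = a |: blk j.
Proof. by move=> _; apply/setP => i; rewrite !inE. Qed.

Definition wb j : algC := (#|blk j|%:R)^-1.

Lemma w_pend j a : small a -> w (pendant n k j a) = wb j.
Proof.
by move=> sa; rewrite /w /wb pendantE // cardsU1 notin_blk //= add1n subn1.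
Qed.

Lemma Ys_pend z j a : small a -> Ys z (pendant n k j a) = z a + Ys z (blk j).
Proof. by move=> sa; rewrite pendantE // /Ys big_setU1 //= notin_blk. Qed.

Lemma S2_pend z j a : small a -> S2 z (pendant n k j a) = z a ^+ 2 + S2 z (blk j).
Proof. by move=> sa; rewrite pendantE // /S2 big_setU1 //= notin_blk. Qed.

Definition Te (z : 'I_n -> algC) (e : {set 'I_n}) := w e * (Ys z e ^+ 2 - S2 z e).
Definition Tp (z : 'I_n -> algC) j (c : algC) :=
  wb j * ((c + Ys z (blk j)) ^+ 2 - (c ^+ 2 + S2 z (blk j))).

Lemma quad_hyp z (a b : 'I_n) : small a -> small b ->
  quad (hadj (hyp n k a b)) z = Te z (e1_edge n k) + Te z (e2_edge n k)
    + \sum_(j <- iota 0 p) Tp z j (z a) + Tp z p (z b).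
Proof.
move=> sa sb; rewrite quad_edges /hyp !big_cons big_cat big_map /= big_seq1.
rewrite !addrA; congr (_ + _ + _ + _).
  by apply: eq_bigr => j _; rewrite /Tp w_pend // Ys_pend // S2_pend.
by rewrite /Tp w_pend // Ys_pend // S2_pend.
Qed.

Lemma Av_hyp z (a b v : 'I_n) : small a -> small b -> small v ->
  Av (hadj (hyp n k a b)) z v =
    (if v \in e1_edge n k then w (e1_edge n k) * (Ys z (e1_edge n k) - z v) else 0)
  + (if v \in e2_edge n k then w (e2_edge n k) * (Ys z (e2_edge n k) - z v) else 0)
  + (if v == a then \sum_(j <- iota 0 p) wb j * Ys z (blk j) else 0)
  + (if v == b then wb p * Ys z (blk p) else 0).
Proof.
move=> sa sb sv; rewrite hadj_Av /hyp !big_cons big_cat big_map /= big_cons big_nil.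
have memP : forall j c, small c -> (v \in pendant n k j c) = (v == c).
  by move=> j c sc; rewrite pendantE // in_setU1 (negPf (notin_blk j sv)) orbF.
rewrite memP // addr0.
have -> : \sum_(j <- iota 0 p | v \in pendant n k j a)
           w (pendant n k j a) * (Ys z (pendant n k j a) - z v) =
          (if v == a then \sum_(j <- iota 0 p) wb j * Ys z (blk j) else 0).
  case: (v =P a) => [<-|/eqP va].
    rewrite big_mkcond /=; apply: eq_bigr => j _.
    by rewrite memP // eqxx w_pend // Ys_pend // [z v + _]addrC addrK.
  by rewrite big1 // => j; rewrite memP // (negPf va).
case: (v \in e1_edge n k); case: (v \in e2_edge n k); case: (v =P b) => [<-|_];
  by rewrite ?w_pend ?Ys_pend // ?[z v + _]addrC ?addrK ?addr0 ?add0r ?addrA.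
Qed.


Lemma k1_gt0 : (0 < k - 1)%N. Proof. lia. Qed.
Lemma n_pos : (0 < n)%N. Proof. have := n_gt; lia. Qed.
Lemma n_1 : (1 < n)%N. Proof. have := n_gt; lia. Qed.
Lemma n_e : (eta < n)%N. Proof. have := n_gt; lia. Qed.
Definition o0 : 'I_n := Ordinal n_pos.
Definition o1 : 'I_n := Ordinal n_1.
Definition oe : 'I_n := Ordinal n_e.

Lemma small0 : small o0. Proof. rewrite /small /=; lia. Qed.
Lemma small1 : small o1. Proof. rewrite /small /=; lia. Qed.
Lemma smalle : small oe. Proof. by rewrite /small /=. Qed.

Lemma fb_lt j : (j <= p)%N -> (2 * k - 2 + j * (k - 1) < n)%N.
Proof. move=> hj; rewrite -n_top; nia. Qed.

Lemma fb_in j (hj : (j <= p)%N) : Ordinal (fb_lt hj) \in blk j.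
Proof. rewrite inE /=; apply/andP; split => //; nia. Qed.

Lemma cover (a b : 'I_n) i : exists2 e, e \in hyp n k a b & i \in e.
Proof.
have [ik|ik] := ltnP i k.
  by exists (e1_edge n k); rewrite ?inE ?ik ?eqxx.
have [i2|i2] := ltnP i (2 * k - 2).
  by exists (e2_edge n k); rewrite !inE ?eqxx ?orbT // ik i2 orbT.
have k0 := k1_gt0.
have hq := divn_eq (i - (2 * k - 2)) (k - 1).
have hr := ltn_pmod (i - (2 * k - 2)) k0.
move: hq hr; set j := ((i - (2 * k - 2)) %/ (k - 1))%N;
  set r := ((i - (2 * k - 2)) %% (k - 1))%N => hq hr.
have iin : forall c, i \in pendant n k j c.
  move=> c; rewrite inE; apply/orP; right; apply/andP; split; nia.
have jp : (j <= p)%N.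
  have hi : (i < 2 * k - 2 + p.+1 * (k - 1))%N by rewrite n_top.
  have : (j * (k - 1) < p.+1 * (k - 1))%N by nia.
  by rewrite ltn_pmul2r.
move: jp; rewrite leq_eqVlt => /orP[/eqP jp|jp].
  exists (pendant n k p b); last by rewrite -jp.
  by rewrite /hyp !inE mem_cat mem_seq1 eqxx !orbT.
exists (pendant n k j a) => //.
rewrite /hyp !inE mem_cat; apply/orP; right; apply/orP; right; apply/orP; left.
by apply: map_f; rewrite mem_iota.
Qed.

Lemma edge_att (a b : 'I_n) e : small a -> small b -> e \in hyp n k a b ->
  [|| o0 \in e, a \in e | b \in e].
Proof.
move=> sa sb; rewrite /hyp !inE mem_cat mem_seq1 => /or3P[/eqP->|/eqP->|/orP[]].
- by apply/orP; left; rewrite inE /=; lia.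
- by apply/orP; left; rewrite inE.
- by case/mapP => j _ ->; rewrite pendantE // setU11 orbT.
- by move/eqP->; rewrite pendantE // setU11 !orbT.
Qed.

Lemma edge_card (a b : 'I_n) e : small a -> small b -> e \in hyp n k a b ->
  (1 < #|e|)%N.
Proof.
move=> sa sb; rewrite /hyp !inE mem_cat mem_seq1 => /or3P[/eqP->|/eqP->|/orP[]].
- apply/card_gt1P; exists o0, o1; rewrite !inE /=; split => //; lia.
- apply/card_gt1P; exists o0, o1; rewrite !inE /=; split => //.
- case/mapP => j; rewrite mem_iota => /andP[_ jp] ->.
  have hj : (j <= p)%N by rewrite add0n in jp; apply: ltnW.
  apply/card_gt1P; exists a, (Ordinal (fb_lt hj)); rewrite pendantE // setU11.
  split => //; first by rewrite in_setU1 fb_in orbT.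
  by apply/negP => /eqP/(congr1 val) /=; move: sa; rewrite /small; lia.
- move/eqP->.
  have hj : (p <= p)%N by [].
  apply/card_gt1P; exists b, (Ordinal (fb_lt hj)); rewrite pendantE // setU11.
  split => //; first by rewrite in_setU1 fb_in orbT.
  by apply/negP => /eqP/(congr1 val) /=; move: sb; rewrite /small; nia.
Qed.

Lemma o0e2 : o0 \in e2_edge n k. Proof. by rewrite inE. Qed.
Lemma oee2 : oe \in e2_edge n k. Proof. by rewrite inE /= He1 He2 orbT. Qed.
Lemma e2_in (a b : 'I_n) : e2_edge n k \in hyp n k a b.
Proof. by rewrite /hyp !inE eqxx orbT. Qed.
Lemma e1_in (a b : 'I_n) : e1_edge n k \in hyp n k a b.
Proof. by rewrite /hyp !inE eqxx. Qed.

Lemma positive (a b : 'I_n) z r :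
  (a == o0) || (a == oe) -> (b == o0) || (b == oe) ->
  (forall i, 0 <= z i) -> (exists i, z i != 0) ->
  (forall i, Av (hadj (hyp n k a b)) z i = r * z i) -> forall i, 0 < z i.
Proof.
move=> ha hb z0 [i0 nz] eig.
have sa : small a by case/orP: ha => /eqP->; [exact: small0 | exact: smalle].
have sb : small b by case/orP: hb => /eqP->; [exact: small0 | exact: smalle].
have Z : forall e, e \in hyp n k a b -> forall i, i \in e -> z i = 0 ->
    forall j, j \in e -> z j = 0.
  move=> e eH i ie zi; apply: (propagate z0 eig zi eH ie).
  exact: edge_card eH.
move=> i; rewrite lt0r z0 andbT; apply/negP => /eqP zi.
have zo0 : z o0 = 0.
  have [e eH ie] := cover a b i.
  have ez := Z e eH i ie zi.
  have fromE : z oe = 0 -> z o0 = 0.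
    by move=> h; apply: (Z _ (e2_in a b) oe oee2 h o0 o0e2).
  case/or3P: (edge_att sa sb eH) => [/ez //|/ez|/ez] h.
    by case/orP: ha => /eqP ea; rewrite ea in h => //; apply: fromE.
  by case/orP: hb => /eqP ea; rewrite ea in h => //; apply: fromE.
have zoe : z oe = 0 by apply: (Z _ (e2_in a b) o0 o0e2 zo0 oe oee2).
have zc : forall c, (c == o0) || (c == oe) -> z c = 0.
  by move=> c /orP[] /eqP ->.
apply/negP: nz; apply/negPn/eqP.
have [e eH ie] := cover a b i0.
case/or3P: (edge_att sa sb eH) => h.
- exact: (Z e eH o0 h zo0 i0 ie).
- exact: (Z e eH a h (zc a ha) i0 ie).
- exact: (Z e eH b h (zc b hb) i0 ie).
Qed.

Lemma Ys_swap (a b : 'I_n) z (e : {set 'I_n}) : a != b ->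
  Ys (swapf a b z) e = Ys z e + (a \in e)%:R * (z b - z a) + (b \in e)%:R * (z a - z b).
Proof. by move=> ab; rewrite /Ys (sum_swap (mem e) id). Qed.

Lemma S2_swap (a b : 'I_n) z (e : {set 'I_n}) : a != b ->
  S2 (swapf a b z) e = S2 z e + (a \in e)%:R * (z b ^+ 2 - z a ^+ 2)
     + (b \in e)%:R * (z a ^+ 2 - z b ^+ 2).
Proof. by move=> ab; rewrite /S2 (sum_swap (mem e) (fun x => x ^+ 2)). Qed.

Lemma nrm_swap (a b : 'I_n) z : a != b -> nrm (swapf a b z) = nrm z.
Proof.
move=> ab; rewrite /nrm (sum_swap predT (fun x => x ^+ 2)) //=; ring.
Qed.

Lemma swapE1 (a b : 'I_n) z : swapf a b z a = z b.
Proof. by rewrite /swapf eqxx. Qed.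
Lemma swapE2 (a b : 'I_n) z : a != b -> swapf a b z b = z a.
Proof. by move=> ab; rewrite /swapf eq_sym (negPf ab) eqxx. Qed.
Lemma swapE3 (a b c : 'I_n) z : c != a -> c != b -> swapf a b z c = z c.
Proof. by move=> ca cb; rewrite /swapf (negPf ca) (negPf cb). Qed.

Lemma swap_real (a b : 'I_n) z : (forall i, z i \is Num.real) ->
  forall i, swapf a b z i \is Num.real.
Proof. by move=> zr i; rewrite /swapf; case: ifP => _; [|case: ifP]. Qed.

Lemma blk_swap (a b : 'I_n) z j : small a -> small b -> a != b ->
  Ys (swapf a b z) (blk j) = Ys z (blk j) /\ S2 (swapf a b z) (blk j) = S2 z (blk j).
Proof.
move=> sa sb ab; rewrite Ys_swap // S2_swap //.
by rewrite (negPf (notin_blk j sa)) (negPf (notin_blk j sb)) !mul0r !addr0.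
Qed.

Lemma Tp_swap (a b : 'I_n) z j c : small a -> small b -> a != b ->
  Tp (swapf a b z) j c = Tp z j c.
Proof. by move=> sa sb ab; case: (blk_swap z j sa sb ab) => h1 h2; rewrite /Tp h1 h2. Qed.

Lemma Ys_ge2 z (e : {set 'I_n}) (x y : 'I_n) : (forall i, 0 <= z i) -> x \in e -> y \in e -> x != y ->
  z x + z y <= Ys z e.
Proof.
move=> z0 xe ye xy; rewrite /Ys (bigD1 x) //= (bigD1 y) /=; last by rewrite ye eq_sym xy.
by rewrite addrA lerDl sumr_ge0.
Qed.

Lemma Ys_ge1 z (e : {set 'I_n}) (x : 'I_n) : (forall i, 0 <= z i) -> x \in e -> z x <= Ys z e.
Proof.
by move=> z0 xe; rewrite /Ys (bigD1 x) //= lerDl sumr_ge0.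
Qed.

Lemma blk_pos z j : (forall i, 0 < z i) -> (j <= p)%N -> 0 < Ys z (blk j).
Proof.
move=> zp hj; apply: lt_le_trans (zp (Ordinal (fb_lt hj))) _.
by apply: Ys_ge1 => [i|]; [apply: ltW | apply: fb_in].
Qed.

Lemma e1_pos z : (forall i, 0 < z i) -> 0 < w (e1_edge n k) * (Ys z (e1_edge n k) - z o1).
Proof.
move=> zp; apply: mulr_gt0.
  rewrite lt0r w_ge0 andbT; apply: w_neq0; apply: (edge_card small0 small1 (e1_in o0 o1)).
rewrite subr_gt0; apply: lt_le_trans (Ys_ge2 (x := o0) (y := o1) _ _ _ _) => //.
- by rewrite ltrDr zp.
- by move=> i; apply: ltW.
- by rewrite inE /=; lia.
- by rewrite inE /=; lia.
Qed.

Lemma o01 : o0 != o1. Proof. by []. Qed.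
Lemma o0e : o0 != oe. Proof. by apply/eqP => /(congr1 val) /=; lia. Qed.
Lemma o1e : o1 != oe. Proof. by apply/eqP => /(congr1 val) /=; lia. Qed.
Lemma o10 : o1 != o0. Proof. by []. Qed.
Lemma o1e1 : o1 \in e1_edge n k. Proof. by rewrite inE /=; lia. Qed.
Lemma o0e1 : o0 \in e1_edge n k. Proof. by rewrite inE /=; lia. Qed.
Lemma oee1 : oe \notin e1_edge n k. Proof. by rewrite inE /= -leqNgt. Qed.
Lemma o1e2 : o1 \in e2_edge n k. Proof. by rewrite inE. Qed.

Lemma wb_pos j : (j <= p)%N -> 0 < wb j.
Proof.
move=> hj; rewrite /wb invr_gt0 ltr0n card_gt0; apply/set0Pn.
by exists (Ordinal (fb_lt hj)); apply: fb_in.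
Qed.

Lemma wb_ge0 j : 0 <= wb j.
Proof. by rewrite /wb invr_ge0 ler0n. Qed.

Lemma Ys_ge0 z (e : {set 'I_n}) : (forall i, 0 <= z i) -> 0 <= Ys z e.
Proof. by move=> z0; apply: sumr_ge0. Qed.

Lemma neq_of_gt (x y d : algC) : x = y + d -> 0 < d -> x != y.
Proof. by move=> -> d0; rewrite -subr_eq0 [y + d]addrC addrK gt_eqF. Qed.

Lemma eigH (a b : 'I_n) : (a == o0) || (a == oe) -> (b == o0) || (b == oe) ->
  exists z : 'I_n -> algC, [/\ forall i, 0 < z i, forall i, z i \is Num.real,
    forall i, Av (hadj (hyp n k a b)) z i = hrho (hyp n k a b) * z i & 0 < nrm z].
Proof.
move=> ha hb.
have [z [z0 nz eig]] := weak_PF (@hadj_sym n (hyp n k a b)) (@hadj_real n (hyp n k a b))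
   (@hadj_ge0 n (hyp n k a b)) (@hadj_diag n (hyp n k a b)) n_pos.
have zp := positive ha hb z0 nz eig.
exists z; split => //.
- by move=> i; apply: ger0_real.
- rewrite /nrm (bigD1 o0) //= ltr_pwDl ?exprn_gt0 //.
  by apply: sumr_ge0 => i _; apply: exprn_ge0.
Qed.

Lemma F3_lt : hrho (hyp n k o0 oe) < hrho (hyp n k o0 o1).
Proof.
have [z [zp zr eig nz]] := @eigH o0 oe (introT orP (or_introl (eqxx _))) (introT orP (or_intror (eqxx _))).
set r := hrho (hyp n k o0 oe) in eig *.
have rr : r \is Num.real by rewrite ger0_real // spec_rad_ge0.
have qH := quad_eig eig.
have z0 : forall i, 0 <= z i by move=> i; apply: ltW.
have [le|lt] := real_leP (zr oe) (zr o1).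
- apply: (cmp (y := z)) => //.
    rewrite -qH !quad_hyp ?small0 ?small1 ?smalle // lerD2l -subr_ge0.
    have -> : Tp z p (z o1) - Tp z p (z oe) =
        wb p * (2 * Ys z (blk p) * (z o1 - z oe)) by rewrite /Tp; ring.
    apply: mulr_ge0; first exact: wb_ge0.
    by apply: mulr_ge0; [apply: mulr_ge0 => //; apply: Ys_ge0 | rewrite subr_ge0].
  exists o1; apply: (neq_of_gt (d := wb p * Ys z (blk p))); last first.
    by apply: mulr_gt0; [apply: wb_pos | apply: blk_pos].
  rewrite -eig !Av_hyp ?small0 ?small1 ?smalle // o1e1 o1e2 [o1 == o0]eq_sym.
  by rewrite (negPf o01) eqxx (negPf o1e) /= !addr0.
- pose y := swapf o1 oe z.
  have yr := swap_real o1 oe zr.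
  apply: (cmp (y := y)) => //; first by rewrite nrm_swap // o1e.
    rewrite nrm_swap ?o1e // -qH !quad_hyp ?small0 ?small1 ?smalle //.
    rewrite /y swapE1 swapE3 ?o01 ?o0e //.
    rewrite (eq_bigr _ (fun j _ => Tp_swap z j (z o0) small1 smalle o1e)).
    rewrite (Tp_swap z p (z oe) small1 smalle o1e).
    have -> : Te (swapf o1 oe z) (e2_edge n k) = Te z (e2_edge n k).
      by rewrite /Te Ys_swap ?o1e // S2_swap ?o1e // o1e2 oee2 /=; congr (_ * _); ring.
    rewrite !lerD2r /Te Ys_swap ?o1e // S2_swap ?o1e // o1e1 (negPf oee1) /= -subr_ge0.
    set Y1 := Ys z (e1_edge n k).
    have -> : w (e1_edge n k) * ((Y1 + 1 * (z oe - z o1) + 0 * (z o1 - z oe)) ^+ 2 -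
       (S2 z (e1_edge n k) + 1 * (z oe ^+ 2 - z o1 ^+ 2) + 0 * (z o1 ^+ 2 - z oe ^+ 2))) -
       w (e1_edge n k) * (Y1 ^+ 2 - S2 z (e1_edge n k)) =
       2 * (z oe - z o1) * (w (e1_edge n k) * (Y1 - z o1)) by ring.
    apply: mulr_ge0; last by apply: ltW; apply: e1_pos.
    by apply: mulr_ge0 => //; rewrite subr_ge0 ltW.
  exists o1; apply: (neq_of_gt (d := w (e1_edge n k) * (Ys z (e1_edge n k) - z o1)));
    last by apply: e1_pos.
  rewrite /y swapE1 -eig !Av_hyp ?small0 ?small1 ?smalle // o1e1 o1e2 (negPf oee1) oee2.
  rewrite [o1 == o0]eq_sym (negPf o01) eqxx [oe == o0]eq_sym (negPf o0e) /=.
  rewrite (proj1 (blk_swap z p small1 smalle o1e)).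
  rewrite (Ys_swap _ (e1_edge n k) o1e) (Ys_swap _ (e2_edge n k) o1e).
  rewrite o1e1 o1e2 (negPf oee1) oee2 swapE1 /= !eqxx /=; ring.
Qed.

Lemma sum_blk_pos z : (forall i, 0 < z i) ->
  0 < \sum_(j <- iota 0 p) wb j * Ys z (blk j).
Proof.
move=> zp.
have p0 : (0 \in iota 0 p) by rewrite mem_iota /=; lia.
rewrite (big_rem _ p0) /= ltr_pwDl //.
  by apply: mulr_gt0; [apply: wb_pos | apply: blk_pos].
apply: sumr_ge0 => j _; apply: mulr_ge0; first exact: wb_ge0.
by apply: Ys_ge0 => i; apply: ltW.
Qed.

Lemma F2_lt : hrho (hyp n k oe o0) < hrho (hyp n k o0 o1).
Proof.
have [z [zp zr eig nz]] := @eigH oe o0 (introT orP (or_intror (eqxx _)))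
  (introT orP (or_introl (eqxx _))).
set r := hrho (hyp n k oe o0) in eig *.
have rr : r \is Num.real by rewrite ger0_real // spec_rad_ge0.
have qH := quad_eig eig.
have z0 : forall i, 0 <= z i by move=> i; apply: ltW.
have [le|lt] := real_leP (zr oe) (zr o1).
- pose y := swapf o0 o1 z.
  have yr := swap_real o0 o1 zr.
  apply: (cmp (y := y)) => //; first by rewrite nrm_swap.
    rewrite nrm_swap // -qH !quad_hyp ?small0 ?small1 ?smalle //.
    rewrite /y swapE1 swapE2 //.
    rewrite (eq_bigr _ (fun j _ => Tp_swap z j (z o1) small0 small1 o01)).
    rewrite (Tp_swap z p (z o0) small0 small1 o01).
    have -> : Te (swapf o0 o1 z) (e2_edge n k) = Te z (e2_edge n k).
      by rewrite /Te Ys_swap // S2_swap // o0e2 o1e2 /=; congr (_ * _); ring.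
    have -> : Te (swapf o0 o1 z) (e1_edge n k) = Te z (e1_edge n k).
      by rewrite /Te Ys_swap // S2_swap // o0e1 o1e1 /=; congr (_ * _); ring.
    rewrite lerD2r lerD2l; apply: ler_sum => j _; rewrite -subr_ge0.
    have -> : Tp z j (z o1) - Tp z j (z oe) =
        wb j * (2 * Ys z (blk j) * (z o1 - z oe)) by rewrite /Tp; ring.
    apply: mulr_ge0; first exact: wb_ge0.
    by apply: mulr_ge0; [apply: mulr_ge0 => //; apply: Ys_ge0 | rewrite subr_ge0].
  exists o0; apply: (neq_of_gt (d := \sum_(j <- iota 0 p) wb j * Ys z (blk j)));
    last by apply: sum_blk_pos.
  rewrite /y swapE1 -eig !Av_hyp ?small0 ?small1 ?smalle // o0e1 o0e2 o1e1 o1e2.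
  rewrite [o1 == o0]eq_sym (negPf o01) (negPf o1e) !eqxx /=.
  rewrite (eq_bigr _ (fun j _ => congr1 (fun x => wb j * x)
     (proj1 (blk_swap z j small0 small1 o01)))).
  rewrite (Ys_swap _ (e1_edge n k) o01) (Ys_swap _ (e2_edge n k) o01).
  rewrite o0e1 o1e1 o0e2 o1e2 swapE1 /=; ring.
- pose z' := swapf o0 oe z.
  pose y := swapf o1 oe z'.
  have yr := swap_real o1 oe (swap_real o0 oe zr).
  apply: (cmp (y := y)) => //; first by rewrite !nrm_swap ?o1e ?o0e.
    rewrite !nrm_swap ?o1e ?o0e // -qH !quad_hyp ?small0 ?small1 ?smalle //.
    rewrite /y swapE1 swapE3 ?o01 ?o0e // /z' swapE1 swapE2 ?o0e //.
    rewrite (eq_bigr _ (fun j _ => Tp_swap _ j (z oe) small1 smalle o1e)).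
    rewrite (eq_bigr _ (fun j _ => Tp_swap z j (z oe) small0 smalle o0e)).
    rewrite (Tp_swap _ p (z o0) small1 smalle o1e) (Tp_swap z p (z o0) small0 smalle o0e).
    have -> : Te (swapf o1 oe (swapf o0 oe z)) (e2_edge n k) = Te z (e2_edge n k).
      rewrite /Te Ys_swap ?o1e // S2_swap ?o1e // Ys_swap ?o0e // S2_swap ?o0e //.
      rewrite o0e2 o1e2 oee2 /=; congr (_ * _); ring.
    rewrite !lerD2r /Te Ys_swap ?o1e // S2_swap ?o1e // Ys_swap ?o0e // S2_swap ?o0e //.
    rewrite o0e1 o1e1 (negPf oee1) /= (swapE2 _ o0e) (@swapE3 o0 oe o1 z o10 o1e).
    rewrite -subr_ge0.
    set Y1 := Ys z (e1_edge n k).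
    have -> : w (e1_edge n k) * ((Y1 + 1 * (z oe - z o0) + 0 * (z o0 - z oe) + 1 * (z o0 - z o1) + 0 * (z o1 - z o0)) ^+ 2 -
       (S2 z (e1_edge n k) + 1 * (z oe ^+ 2 - z o0 ^+ 2) + 0 * (z o0 ^+ 2 - z oe ^+ 2) + 1 * (z o0 ^+ 2 - z o1 ^+ 2) + 0 * (z o1 ^+ 2 - z o0 ^+ 2))) -
       w (e1_edge n k) * (Y1 ^+ 2 - S2 z (e1_edge n k)) =
       2 * (z oe - z o1) * (w (e1_edge n k) * (Y1 - z o1)) by ring.
    apply: mulr_ge0; last by apply: ltW; apply: e1_pos.
    by apply: mulr_ge0 => //; rewrite subr_ge0 ltW.
  have y0 : y o0 = z oe by rewrite /y swapE3 ?o01 ?o0e // /z' swapE1.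
  exists o0; apply: (neq_of_gt (d := w (e1_edge n k) * (Ys z (e1_edge n k) - z o1)));
    last by apply: e1_pos.
  rewrite y0 -eig !Av_hyp ?small0 ?small1 ?smalle // o0e1 o0e2 (negPf oee1) oee2.
  rewrite (negPf o01) [oe == o0]eq_sym (negPf o0e) !eqxx /= y0.
  rewrite (eq_bigr _ (fun j _ => congr1 (fun x => wb j * x)
     (proj1 (blk_swap _ j small1 smalle o1e)))).
  rewrite (eq_bigr _ (fun j _ => congr1 (fun x => wb j * x)
     (proj1 (blk_swap z j small0 smalle o0e)))).
  rewrite /y (Ys_swap _ (e1_edge n k) o1e) (Ys_swap _ (e2_edge n k) o1e).
  rewrite /z' (Ys_swap _ (e1_edge n k) o0e) (Ys_swap _ (e2_edge n k) o0e).
  rewrite o0e1 o1e1 o0e2 o1e2 oee2 (negPf oee1) /=.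
  rewrite ?(swapE2 _ o0e) ?(@swapE3 o0 oe o1 z o10 o1e); ring.
Qed.

End Spec.


Unset Implicit Arguments.

Theorem lemma3p8 (k n eta : nat) :
  (3 <= k)%N -> (k - 1 %| n)%N -> (4 <= n %/ (k - 1))%N ->
  (k <= eta)%N -> (eta < 2 * k - 2)%N ->
  hrho (hF2 n k eta) < hrho (hF n k) /\ hrho (hF3 n k eta) < hrho (hF n k).
Proof.
move=> Hk Hdiv Hm He1 He2; split.
- exact: (@F2_lt n k eta Hk Hdiv Hm He1 He2).
- exact: (@F3_lt n k eta Hk Hdiv Hm He1 He2).
Qed.
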